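(* Assume (F), fix $\alpha\in\,]0,1[$, and let $0\le u^-<u^+\le V$ with $\hat\rho_{u^+}\le\check\rho_{u^-}$. Then $$u^+-u^-\ \ge\ \frac{\beta}{2}\,\big(\hat\rho_{u^-}-\check\rho_{u^-}\big).$$
   Context: Hypothesis (F): $R>0$; $f\in C^2([0,R];[0,+\infty))$ with $f(\rho)=\rho v(\rho)$, $v\in C^2([0,R];[0,+\infty))$; $f(0)=f(R)=0$; there are $B\ge\beta>0$ with $-B\le f''\le-\beta$ on $[0,R]$; $v'(\rho)<0$ for $\rho\in\,]0,R[$. Let $V:=\max_{[0,R]}v=v(0)$. Define $f_\alpha(\rho):=\alpha f(\rho/\alpha)$ for $\rho\in[0,\alpha R]$. For $u\in[0,V]$: $\tilde\rho_u$ is the unique solution of $f_\alpha'(\rho)=u$; $\varphi_u(\rho):=f_\alpha(\tilde\rho_u)+u(\rho-\tilde\rho_u)$ for $\rho\in[0,R]$; $\mathcal I_u:=\{\rho\in[0,R]: f(\rho)=\varphi_u(\rho)\}$, $\check\rho_u:=\min\mathcal I_u$, $\hat\rho_u:=\max\mathcal I_u$. *)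

(* Defs.v *)
From Stdlib Require Import Reals Lra.
Open Scope R_scope.

Definition deriv_within (a b : R) (g : R -> R) (x l : R) : Prop :=
  forall eps, 0 < eps -> exists delta, 0 < delta /\
    forall h, h <> 0 -> Rabs h < delta -> a <= x + h <= b ->
      Rabs ((g (x + h) - g x) / h - l) < eps.

Definition cont_within (a b : R) (g : R -> R) (x : R) : Prop :=
  forall eps, 0 < eps -> exists delta, 0 < delta /\
    forall y, a <= y <= b -> Rabs (y - x) < delta -> Rabs (g y - g x) < eps.

Definition C2_on (a b : R) (g g1 g2 : R -> R) : Prop :=
  forall x, a <= x <= b ->
    deriv_within a b g x (g1 x) /\ deriv_within a b g1 x (g2 x) /\
    cont_within a b g2 x.

Definition hypF (Rr : R) (f f1 f2 v v1 v2 : R -> R) (B beta : R) : Prop :=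
  0 < Rr /\
  C2_on 0 Rr f f1 f2 /\ C2_on 0 Rr v v1 v2 /\
  (forall x, 0 <= x <= Rr -> 0 <= f x /\ 0 <= v x /\ f x = x * v x) /\
  f 0 = 0 /\ f Rr = 0 /\
  0 < beta /\ beta <= B /\
  (forall x, 0 <= x <= Rr -> - B <= f2 x <= - beta) /\
  (forall x, 0 < x < Rr -> v1 x < 0).

Definition f_alpha (alpha : R) (f : R -> R) (rho : R) : R := alpha * f (rho / alpha).

Definition is_tilde_rho (Rr alpha : R) (f : R -> R) (u rt : R) : Prop :=
  0 <= rt <= alpha * Rr /\ deriv_within 0 (alpha * Rr) (f_alpha alpha f) rt u.

Definition phi_u (alpha : R) (f : R -> R) (u rt rho : R) : R :=
  f_alpha alpha f rt + u * (rho - rt).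

Definition in_I (Rr alpha : R) (f : R -> R) (u rt rho : R) : Prop :=
  0 <= rho <= Rr /\ f rho = phi_u alpha f u rt rho.

Definition is_check_rho (Rr alpha : R) (f : R -> R) (u rt x : R) : Prop :=
  in_I Rr alpha f u rt x /\ (forall y, in_I Rr alpha f u rt y -> x <= y).

Definition is_hat_rho (Rr alpha : R) (f : R -> R) (u rt x : R) : Prop :=
  in_I Rr alpha f u rt x /\ (forall y, in_I Rr alpha f u rt y -> y <= x).

(* Main.v *)
Require Import Defs.
From Stdlib Require Import Reals Lra Psatz.
From Coquelicot Require Import Coquelicot.
Open Scope R_scope.

Definition cl (a b x : R) : R := Rmax a (Rmin b x).

Lemma cl_in a b x : a <= b -> a <= cl a b x <= b.
Proof. intros. unfold cl, Rmax, Rmin; repeat destruct Rle_dec; lra. Qed.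

Lemma cl_id a b x : a <= x <= b -> cl a b x = x.
Proof. intros. unfold cl, Rmax, Rmin; repeat destruct Rle_dec; lra. Qed.

Lemma cl_lip a b x y : a <= b -> Rabs (cl a b y - cl a b x) <= Rabs (y - x).
Proof.
  intros. unfold cl, Rmax, Rmin; repeat destruct Rle_dec; unfold Rabs;
  repeat destruct Rcase_abs; lra.
Qed.

Lemma deriv_cont a b phi x l :
  deriv_within a b phi x l -> cont_within a b phi x.
Proof.
  intros H eps He.
  destruct (H 1 Rlt_0_1) as [d [Hd Hq]].
  assert (Hl : 0 < Rabs l + 1) by (pose proof (Rabs_pos l); lra).
  exists (Rmin d (eps / (Rabs l + 1))). split.
  { apply Rmin_glb_lt; [lra| apply Rdiv_lt_0_compat; lra]. }
  intros y Hy Hyx.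
  destruct (Req_dec y x) as [E|E].
  { subst. replace (phi x - phi x) with 0 by ring. rewrite Rabs_R0; lra. }
  assert (Hh : y - x <> 0) by lra.
  pose proof (Rmin_l d (eps / (Rabs l + 1))).
  pose proof (Rmin_r d (eps / (Rabs l + 1))).
  specialize (Hq (y - x) Hh ltac:(lra) ltac:(replace (x + (y-x)) with y by ring; lra)).
  replace (x + (y - x)) with y in Hq by ring.
  set (q := (phi y - phi x) / (y - x)) in *.
  assert (Eq : phi y - phi x = q * (y - x)) by (unfold q; field; auto).
  rewrite Eq, Rabs_mult.
  assert (Rabs q < Rabs l + 1).
  { pose proof (Rabs_triang_inv q l). lra. }
  assert (Rabs (y - x) * (Rabs l + 1) < eps).
  { replace eps with ((eps / (Rabs l + 1)) * (Rabs l + 1)) by (field; lra).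
    apply Rmult_lt_compat_r; lra. }
  pose proof (Rabs_pos q). pose proof (Rabs_pos (y-x)). nra.
Qed.

Lemma cont_clamp a b phi : a <= b ->
  (forall x, a <= x <= b -> cont_within a b phi x) ->
  continuity (fun x => phi (cl a b x)).
Proof.
  intros Hab H x.
  unfold continuity_pt, continue_in, limit1_in, limit_in. simpl. unfold R_dist.
  intros eps He.
  destruct (H (cl a b x) (cl_in a b x Hab) eps He) as [d [Hd Hc]].
  exists d. split; auto. intros y [_ Hy].
  apply Hc. apply cl_in; auto.
  pose proof (cl_lip a b x y Hab). lra.
Qed.

Lemma mvt_within a b phi psi x y :
  a <= x -> x < y -> y <= b ->
  (forall z, a <= z <= b -> deriv_within a b phi z (psi z)) ->
  exists c, x <= c <= y /\ phi y - phi x = psi c * (y - x).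
Proof.
  intros Hax Hxy Hyb Hd.
  assert (Hcont : continuity (fun t => phi (cl a b t))).
  { apply cont_clamp. lra. intros z Hz. exact (deriv_cont _ _ _ _ _ (Hd z Hz)). }
  destruct (MVT_gen (fun t => phi (cl a b t)) x y psi) as [c [Hc Eq]].
  - intros z Hz. rewrite Rmin_left in Hz by lra. rewrite Rmax_right in Hz by lra.
    apply is_derive_Reals. intros eps He.
    destruct (Hd z ltac:(lra) eps He) as [d [Hdp Hq]].
    assert (Hm : 0 < Rmin d (Rmin (z - a) (b - z))).
    { repeat apply Rmin_glb_lt; lra. }
    exists (mkposreal _ Hm). simpl. intros h Hh Hha.
    pose proof (Rmin_l d (Rmin (z - a) (b - z))).
    pose proof (Rmin_r d (Rmin (z - a) (b - z))).
    pose proof (Rmin_l (z - a) (b - z)). pose proof (Rmin_r (z - a) (b - z)).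
    pose proof (Rabs_def2 _ _ Hha).
    rewrite (cl_id a b (z + h)) by lra. rewrite (cl_id a b z) by lra.
    apply Hq; auto; lra.
  - intros; apply Hcont.
  - rewrite Rmin_left in Hc by lra. rewrite Rmax_right in Hc by lra.
    rewrite (cl_id a b x), (cl_id a b y) in Eq by lra.
    exists c; split; auto.
Qed.

Lemma deriv_add_quad a b phi l x c :
  deriv_within a b phi x l -> 0 < c ->
  deriv_within a b (fun y => phi y + c / 2 * y * y) x (l + c * x).
Proof.
  intros H Hc eps He.
  destruct (H (eps/2) ltac:(lra)) as [d [Hd Hq]].
  exists (Rmin d (eps / c)). split.
  { apply Rmin_glb_lt; [lra| apply Rdiv_lt_0_compat; lra]. }
  intros h Hh Hha Hin.
  pose proof (Rmin_l d (eps / c)). pose proof (Rmin_r d (eps / c)).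
  specialize (Hq h Hh ltac:(lra) Hin).
  replace ((phi (x + h) + c / 2 * (x + h) * (x + h) - (phi x + c / 2 * x * x)) / h - (l + c * x))
    with (((phi (x + h) - phi x) / h - l) + c / 2 * h) by (field; auto).
  eapply Rle_lt_trans. apply Rabs_triang.
  assert (Rabs (c / 2 * h) < eps / 2).
  { rewrite Rabs_mult. rewrite (Rabs_right (c/2)) by lra.
    assert (Rabs h * c < eps).
    { replace eps with ((eps / c) * c) by (field; lra).
      apply Rmult_lt_compat_r; lra. }
    lra. }
  lra.
Qed.

Lemma deriv_sub_aff a b phi L q l x :
  deriv_within a b phi x l -> (forall y z, L y - L z = q * (y - z)) ->
  deriv_within a b (fun y => phi y - L y) x (l - q).
Proof.
  intros H HL eps He.
  destruct (H eps He) as [d [Hd Hq]]. exists d; split; auto.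
  intros h Hh Hha Hin. specialize (Hq h Hh Hha Hin).
  replace ((phi (x + h) - L (x + h) - (phi x - L x)) / h - (l - q))
    with ((phi (x + h) - phi x) / h - l); auto.
  rewrite <- (Rplus_0_r ((phi (x + h) - phi x) / h - l)).
  replace 0 with (q - (L (x+h) - L x)/h) by (rewrite HL; field; auto).
  field; auto.
Qed.

Lemma strong_conc Rr f f1 f2 v v1 v2 B beta :
  hypF Rr f f1 f2 v v1 v2 B beta ->
  forall a z b, 0 <= a -> a <= z -> z <= b -> b <= Rr ->
  (b - a) * f z >= (b - z) * f a + (z - a) * f b + beta / 2 * (z - a) * (b - z) * (b - a).
Proof.
  intros [HR [Cf [Cv [Hpos [f0 [fR [hb [hbB [Hf2 Hv1]]]]]]]]] a z b Ha Haz Hzb Hb.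
  destruct (Req_dec a z) as [E|E]. { subst. nra. }
  destruct (Req_dec z b) as [E'|E']. { subst. nra. }
  assert (Hk : forall x y, 0 <= x -> x <= y -> y <= Rr -> f1 y - f1 x <= - beta * (y - x)).
  { intros x y Hx Hxy Hy. destruct (Req_dec x y). { subst; nra. }
    destruct (mvt_within 0 Rr f1 f2 x y) as [c [Hc Eq]]; try lra.
    { intros w Hw. apply (Cf w Hw). }
    rewrite Eq. pose proof (Hf2 c ltac:(lra)). nra. }
  set (h := fun y => f y + beta / 2 * y * y).
  assert (Hdh : forall w, 0 <= w <= Rr -> deriv_within 0 Rr h w (f1 w + beta * w)).
  { intros w Hw. apply deriv_add_quad; [apply (Cf w Hw)| lra]. }
  destruct (mvt_within 0 Rr h (fun w => f1 w + beta * w) a z) as [c1 [Hc1 E1]]; try lra; auto.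
  destruct (mvt_within 0 Rr h (fun w => f1 w + beta * w) z b) as [c2 [Hc2 E2]]; try lra; auto.
  pose proof (Hk c1 c2 ltac:(lra) ltac:(lra) ltac:(lra)).
  unfold h in E1, E2. cbv beta in E1, E2.
  assert (K : (b - a) * (f z + beta / 2 * z * z) - (b - z) * (f a + beta / 2 * a * a)
              - (z - a) * (f b + beta / 2 * b * b) >= 0).
  { replace ((b - a) * (f z + beta / 2 * z * z) - (b - z) * (f a + beta / 2 * a * a)
              - (z - a) * (f b + beta / 2 * b * b))
      with ((b - z) * ((f z + beta / 2 * z * z) - (f a + beta / 2 * a * a))
            - (z - a) * ((f b + beta / 2 * b * b) - (f z + beta / 2 * z * z))) by ring.
    rewrite E1, E2.
    assert (0 <= (b - z) * (z - a)) by nra.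
    assert (0 <= (f1 c1 + beta * c1) - (f1 c2 + beta * c2)) by nra.
    replace ((b - z) * ((f1 c1 + beta * c1) * (z - a)) - (z - a) * ((f1 c2 + beta * c2) * (b - z)))
      with (((b - z) * (z - a)) * ((f1 c1 + beta * c1) - (f1 c2 + beta * c2))) by ring.
    apply Rle_ge, Rmult_le_pos; auto. }
  replace (beta / 2 * (z - a) * (b - z) * (b - a)) with
    (- (beta / 2) * ((b - a) * z * z - (b - z) * a * a - (z - a) * b * b)) by ring.
  lra.
Qed.

Lemma tangent Rr f f1 f2 v v1 v2 B beta alpha u T :
  hypF Rr f f1 f2 v v1 v2 B beta -> 0 < alpha < 1 ->
  is_tilde_rho Rr alpha f u T ->
  alpha * f Rr <= f_alpha alpha f T + u * (alpha * Rr - T).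
Proof.
  intros HF Ha [HT HdT].
  pose proof HF as [HR _].
  pose proof (strong_conc _ _ _ _ _ _ _ _ _ HF) as SC.
  pose proof HF as [_ [_ [_ [_ [_ [_ [hb _]]]]]]].
  assert (EfR : f_alpha alpha f (alpha * Rr) = alpha * f Rr).
  { unfold f_alpha. replace (alpha * Rr / alpha) with Rr by (field; lra). auto. }
  destruct (Req_dec T (alpha * Rr)) as [E|E].
  { rewrite E, <- EfR. lra. }
  apply Rnot_lt_le. intro Hc.
  set (D := alpha * Rr - T).
  assert (HD : 0 < D) by (unfold D; lra).
  set (s := (alpha * f Rr - f_alpha alpha f T) / D).
  assert (Hs : s * D = alpha * f Rr - f_alpha alpha f T) by (unfold s; field; lra).
  assert (Hsu : u < s).
  { apply (Rmult_lt_reg_r D); auto. rewrite Hs. fold D in Hc. lra. }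
  destruct (HdT (s - u) ltac:(lra)) as [d [Hd Hq]].
  set (h := Rmin (d / 2) D).
  assert (Hh1 : h <= d / 2) by apply Rmin_l.
  assert (Hh2 : h <= D) by apply Rmin_r.
  assert (Hh0 : 0 < h) by (apply Rmin_glb_lt; lra).
  specialize (Hq h ltac:(lra) ltac:(rewrite Rabs_right; lra) ltac:(unfold D in Hh2; lra)).
  set (Q := (f_alpha alpha f (T + h) - f_alpha alpha f T) / h) in *.
  assert (HQ : Q < s) by (pose proof (Rabs_def2 _ _ Hq); lra).
  assert (EQ : Q * h = f_alpha alpha f (T + h) - f_alpha alpha f T) by (unfold Q; field; lra).
  set (p := T / alpha). set (q := (T + h) / alpha).
  assert (Ep : alpha * p = T) by (unfold p; field; lra).
  assert (Eq : alpha * q = T + h) by (unfold q; field; lra).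
  assert (Hp0 : 0 <= p) by (unfold p; apply Rdiv_le_0_compat; lra).
  assert (Hpq : p <= q) by (apply (Rmult_le_reg_l alpha); lra).
  assert (HqR : q <= Rr) by (apply (Rmult_le_reg_l alpha); unfold D in Hh2; lra).
  specialize (SC p q Rr Hp0 Hpq HqR ltac:(lra)).
  assert (X : (Rr - p) * f q - (Rr - q) * f p - (q - p) * f Rr >= 0).
  { assert (0 <= beta / 2 * (q - p) * (Rr - q) * (Rr - p)).
    { repeat apply Rmult_le_pos; lra. }
    lra. }
  assert (Ef1 : f_alpha alpha f (T + h) = alpha * f q) by reflexivity.
  assert (Ef2 : f_alpha alpha f T = alpha * f p) by reflexivity.
  assert (Y : D * (f_alpha alpha f (T + h) - f_alpha alpha f T)
             - h * (alpha * f Rr - f_alpha alpha f T) =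
             alpha * alpha * ((Rr - p) * f q - (Rr - q) * f p - (q - p) * f Rr)).
  { rewrite Ef1, Ef2. unfold D. rewrite <- Ep. replace h with (alpha * q - alpha * p) by lra.
    ring. }
  assert (Y2 : 0 <= alpha * alpha * ((Rr - p) * f q - (Rr - q) * f p - (q - p) * f Rr)).
  { apply Rmult_le_pos; [nra| lra]. }
  rewrite <- EQ, <- Hs in Y.
  assert (Z : 0 < D * h * (s - Q)) by (repeat apply Rmult_lt_0_compat; lra).
  replace (D * (Q * h) - h * (s * D)) with (- (D * h * (s - Q))) in Y by ring.
  lra.
Qed.

Theorem mainTheorem3 :
  forall (Rr : R) (f f1 f2 v v1 v2 : R -> R) (B beta alpha um up : R)
         (rtm rtp chk_m hat_m hat_p : R),
  hypF Rr f f1 f2 v v1 v2 B beta ->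
  0 < alpha < 1 ->
  0 <= um -> um < up -> up <= v 0 ->
  is_tilde_rho Rr alpha f um rtm ->
  is_tilde_rho Rr alpha f up rtp ->
  is_check_rho Rr alpha f um rtm chk_m ->
  is_hat_rho Rr alpha f um rtm hat_m ->
  is_hat_rho Rr alpha f up rtp hat_p ->
  hat_p <= chk_m ->
  up - um >= beta / 2 * (hat_m - chk_m).
Proof.
  intros Rr f f1 f2 v v1 v2 B beta alpha um up rtm rtp cm hm hp
    HF Ha Hum Hup Hv Htm Htp Hcm Hhm Hhp Hpc.
  pose proof (strong_conc _ _ _ _ _ _ _ _ _ HF) as SC.
  pose proof HF as [HR [Cf [Cv [Hpos [f0 [fR [hb [hbB [Hf2 Hv1]]]]]]]]].
  destruct Hcm as [[Icr Ice] Icmin].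
  destruct Hhm as [[Ihr Ihe] Ihmax].
  destruct Hhp as [[Ipr Ipe] Ipmax].
  assert (Hch : cm <= hm) by (apply Ihmax; split; auto).
  destruct (Req_dec hm cm) as [E|E].
  { rewrite E. replace (cm - cm) with 0 by ring. lra. }
  pose proof (tangent _ _ _ _ _ _ _ _ _ _ _ _ HF Ha Htp) as Tg.
  assert (HLR : f Rr - phi_u alpha f up rtp Rr <= 0).
  { unfold phi_u. rewrite fR in *.
    assert (0 <= up * (Rr - alpha * Rr)).
    { apply Rmult_le_pos; nra. }
    lra. }
  assert (C2 : forall x, hp < x <= Rr -> f x <= phi_u alpha f up rtp x).
  { intros x Hx. apply Rnot_lt_le. intro Hc.
    set (g := fun y => f y - phi_u alpha f up rtp y).
    assert (Hg : continuity (fun t => g (cl 0 Rr t))).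
    { apply cont_clamp. lra. intros w Hw.
      apply (deriv_cont _ _ _ _ (f1 w - up)).
      apply deriv_sub_aff. apply (Cf w Hw).
      intros y z. unfold phi_u. ring. }
    destruct (IVT_cor _ x Rr Hg ltac:(lra)) as [z [Hz Gz]].
    { rewrite (cl_id 0 Rr x) by lra. rewrite (cl_id 0 Rr Rr) by lra.
      unfold g. assert (0 < f x - phi_u alpha f up rtp x) by lra. nra. }
    rewrite (cl_id 0 Rr z) in Gz by lra. unfold g in Gz.
    assert (z <= hp) by (apply Ipmax; split; [lra| lra]).
    lra. }
  assert (M : forall x, cm < x <= hm -> up - um >= beta / 2 * (hm - x)).
  { intros x Hx.
    specialize (SC cm x hm ltac:(lra) ltac:(lra) ltac:(lra) ltac:(lra)) as S1.
    pose proof (strong_conc _ _ _ _ _ _ _ _ _ HF hp cm x ltac:(lra) ltac:(lra) ltac:(lra) ltac:(lra)) as S2.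
    pose proof (C2 x ltac:(lra)) as S3.
    unfold phi_u in *.
    assert (A1 : (hm - cm) * (f x - f cm - um * (x - cm) - beta / 2 * (x - cm) * (hm - x)) >= 0).
    { rewrite Ice. rewrite Ice, Ihe in S1.
      replace ((hm - cm) * (f x - (f_alpha alpha f rtm + um * (cm - rtm)) - um * (x - cm) - beta / 2 * (x - cm) * (hm - x)))
        with ((hm - cm) * f x -
              ((hm - x) * (f_alpha alpha f rtm + um * (cm - rtm)) +
               (x - cm) * (f_alpha alpha f rtm + um * (hm - rtm)) +
               beta / 2 * (x - cm) * (hm - x) * (hm - cm))) by ring.
      lra. }
    assert (A2 : f x - f cm - um * (x - cm) - beta / 2 * (x - cm) * (hm - x) >= 0).
    { destruct (Rle_or_lt 0 (f x - f cm - um * (x - cm) - beta / 2 * (x - cm) * (hm - x))); [lra|].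
      exfalso. assert (0 < (hm - cm) * - (f x - f cm - um * (x - cm) - beta / 2 * (x - cm) * (hm - x)))
        by (apply Rmult_lt_0_compat; lra). lra. }
    assert (B0 : 0 <= beta / 2 * (cm - hp) * (x - cm) * (x - hp)).
    { repeat apply Rmult_le_pos; lra. }
    assert (A3 : (x - hp) * (f x - f cm) <= (x - cm) * (up * (x - hp))).
    { assert ((x - cm) * (f x - f hp) <= (x - cm) * (up * (x - hp))).
      { apply Rmult_le_compat_l. lra. rewrite Ipe. lra. }
      lra. }
    assert (A4 : f x - f cm <= up * (x - cm)).
    { destruct (Rle_or_lt (f x - f cm) (up * (x - cm))); auto. exfalso.
      assert (0 < (x - hp) * (f x - f cm - up * (x - cm))) by (apply Rmult_lt_0_compat; lra).
      lra. }
    assert (A5 : (x - cm) * (up - um - beta / 2 * (hm - x)) >= 0) by lra.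
    destruct (Rle_or_lt (beta / 2 * (hm - x)) (up - um)); [lra|]. exfalso.
    assert (0 < (x - cm) * - (up - um - beta / 2 * (hm - x))) by (apply Rmult_lt_0_compat; lra).
    lra. }
  destruct (Rle_or_lt (beta / 2 * (hm - cm)) (up - um)) as [H|H]; [lra|]. exfalso.
  set (dl := beta / 2 * (hm - cm) - (up - um)).
  set (e := Rmin (hm - cm) (dl / beta)).
  assert (He1 : e <= hm - cm) by apply Rmin_l.
  assert (He2 : e <= dl / beta) by apply Rmin_r.
  assert (He0 : 0 < e) by (apply Rmin_glb_lt; [lra| apply Rdiv_lt_0_compat; unfold dl; lra]).
  specialize (M (cm + e) ltac:(lra)).
  assert (beta * e <= dl).
  { replace dl with (beta * (dl / beta)) by (field; lra). apply Rmult_le_compat_l; lra. }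
  unfold dl in *. lra.
Qed.
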